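(* Let $I = \{i_1 < \cdots < i_k\} \subset [n-1]$, $0 \leq m \leq n$ and $r \geq 0$. Then $\partial_{e_r(x_1, \ldots, x_{n-m})}\, \mathrm{d}_{i_1} \cdots \mathrm{d}_{i_k} \Delta_n$ equals the sum of the weights of all marked $n$-staircases with exactly $m$ grey columns, exactly $r$ marks $\circ$, and exactly $k$ columns containing $\times$'s, the numbers of $\times$'s in these columns being $i_1, \ldots, i_k$ in some order.
   Context: Work in $\mathbb{Q}[x_1, \ldots, x_n, \theta_1, \ldots, \theta_n]$ ($x$'s commute, $\theta$'s anticommute, $x_i\theta_j = \theta_j x_i$). $\Delta_n = \prod_{i<j}(x_j - x_i)$; $\partial_g$ substitutes $\partial_{x_i}$ for $x_i$ in $g$; $\mathrm{d}_i \omega = \sum_{j=1}^n \theta_j \partial_{x_j}^i \omega$; $e_r(x_1,\ldots,x_p)$ is the elementary symmetric polynomial ($e_0 = 1$, $e_r = 0$ for $r > p$). An $n$-staircase is a sequence $(h_1, \ldots, h_n)$ that is a permutation of $\{0, 1, \ldots, n-1\}$, pictured as $n$ bottom-justified columns where column $\ell$ has cells at heights $1, \ldots, h_\ell$. A marked $n$-staircase with $m$ grey columns consists of an $n$-staircase together with integers $a_\ell \geq 0$ and $b_\ell \in \{0,1\}$ for each column $\ell$, with $a_\ell + b_\ell \leq h_\ell$ and $b_\ell = 0$ for the last $m$ columns $\ell > n-m$ (the grey columns); column $\ell$ has $\times$'s in its top $a_\ell$ cells (heights $h_\ell - a_\ell + 1, \ldots, h_\ell$) and, if $b_\ell = 1$,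 an $\circ$ in the cell at height $h_\ell - a_\ell$. Let $c_1 < \cdots < c_p$ be the columns with $a_{c} > 0$. The weight of the marked staircase is the product of: the monomial $x_1^{h_1 - a_1 - b_1} \cdots x_n^{h_n - a_n - b_n} \theta_{c_1} \cdots \theta_{c_p}$; the sign $(-1)^{\#\{i<j : h_i > h_j\}} \operatorname{sgn} \prod_{1 \leq v < w \leq p}(a_{c_w} - a_{c_v})$ (where $\operatorname{sgn}$ is the signum function, so this is $0$ if two $a_{c_v}$ coincide); and the order, which is the product of the heights of all cells containing a $\times$ or an $\circ$. *)

(* Defs.v *)
From HB Require Import structures.
From mathcomp Require Import all_boot all_order all_fingroup all_algebra.
From mathcomp Require Export mpoly.
Set Implicit Arguments.
Unset Strict Implicit.
Unset Printing Implicit Defensive.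
Import Order.TTheory GRing.Theory Num.Theory.
Local Open Scope ring_scope.

(* Indices: variable/column i in {1..n} of the paper is (i-1 : 'I_n) here. *)

Notation qpoly n := {mpoly rat[n]}.

(* The superspace ring Q[x_1..x_n, theta_1..theta_n]: an element is written
   uniquely as  sum_S  w(S) theta_S  with w(S) in Q[x], where for
   S = {s_1 < ... < s_p}, theta_S := theta_{s_1} ... theta_{s_p}. *)
Definition superpoly (n : nat) := {ffun {set 'I_n} -> qpoly n}.

(* sign of moving theta_j to its place in theta_T (j \notin T):
   theta_j theta_T = (-1)^{#{t in T | t < j}} theta_{T u {j}} *)
Definition theta_sign n (j : 'I_n) (T : {set 'I_n}) : rat :=
  (-1) ^+ #|[set t in T | (val t < val j)%N]|.

Definition thetaL n (j : 'I_n) (w : superpoly n) : superpoly n :=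
  [ffun S : {set 'I_n} => if j \in S then theta_sign j (S :\ j) *: w (S :\ j) else 0].

(* coefficientwise action of an operator on Q[x] (commutes with thetas) *)
Definition coefwise n (f : qpoly n -> qpoly n) (w : superpoly n) : superpoly n :=
  [ffun S : {set 'I_n} => f (w S)].

Definition superC n (p : qpoly n) : superpoly n :=
  [ffun S : {set 'I_n} => if S == set0 then p else 0].

Definition pdiff n (g : qpoly n) (p : qpoly n) : qpoly n :=
  \sum_(m <- msupp g) g@_m *: p^`M[m].

Definition spdiff n (g : qpoly n) (w : superpoly n) : superpoly n :=
  coefwise (pdiff g) w.

Definition dop n (i : nat) (w : superpoly n) : superpoly n :=
  \sum_(j < n) thetaL j (coefwise (fun p => p^`M(j, i)) w).

Definition vandermonde n : qpoly n :=
  \prod_(i < n) \prod_(j < n | (val i < val j)%N) ('X_j - 'X_i).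

Definition elemsym n (p r : nat) : qpoly n :=
  \sum_(A : {set 'I_n} | [forall i in A, (val i < p)%N] && (#|A| == r)) \prod_(i in A) 'X_i.

(* A marked n-staircase is given by h : {perm 'I_n} (h_l = val (h l), a
   permutation of {0..n-1}), a : 'I_n -> 'I_n (numbers of x's; a_l <= h_l < n)
   and b : 'I_n -> bool (presence of a circle). *)

Definition is_marked_staircase n (m : nat) (h : {perm 'I_n})
    (a : {ffun 'I_n -> 'I_n}) (b : {ffun 'I_n -> bool}) : bool :=
  [forall l, (val (a l) + b l <= val (h l))%N] &&
  [forall l : 'I_n, (n - m <= l)%N ==> ~~ b l].

Definition xcols n (a : {ffun 'I_n -> 'I_n}) : {set 'I_n} :=
  [set c | (0 < val (a c))%N].

Definition inversions n (h : {perm 'I_n}) : nat :=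
  #|[set p : 'I_n * 'I_n | (val p.1 < val p.2)%N && (val (h p.2) < val (h p.1))%N]|.

Definition staircase_sign n (h : {perm 'I_n}) (a : {ffun 'I_n -> 'I_n}) : rat :=
  (-1) ^+ inversions h *
  \prod_(v in xcols a) \prod_(w in xcols a | (val v < val w)%N)
     Num.sg ((val (a w))%:R - (val (a v))%:R : rat).

(* product of heights of the cells with a x or a circle: in column l these are
   heights h_l - a_l - b_l + 1, ..., h_l *)
Definition staircase_order n (h : {perm 'I_n}) (a : {ffun 'I_n -> 'I_n})
    (b : {ffun 'I_n -> bool}) : nat :=
  \prod_(l < n) \prod_((val (h l) - val (a l) - b l).+1 <= t < (val (h l)).+1) t.

Definition staircase_monomial n (h : {perm 'I_n}) (a : {ffun 'I_n -> 'I_n})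
    (b : {ffun 'I_n -> bool}) : 'X_{1..n} :=
  [multinom (val (h i) - val (a i) - b i)%N | i < n].

Definition staircase_weight n (h : {perm 'I_n}) (a : {ffun 'I_n -> 'I_n})
    (b : {ffun 'I_n -> bool}) : superpoly n :=
  [ffun S : {set 'I_n} => if S == xcols a then
     (staircase_sign h a * (staircase_order h a b)%:R) *: 'X_[staircase_monomial h a b]
   else 0].

(* Main.v *)
Require Import Defs.
From mathcomp Require Import all_boot all_order all_fingroup all_algebra.
From mathcomp Require Import mpoly.
Import GRing.Theory Num.Theory.
Local Open Scope ring_scope.
Set Implicit Arguments.
Unset Strict Implicit.
Unset Printing Implicit Defensive.

Section Work.
Variable n : nat.


Lemma md0 m : (0 : {mpoly rat[n]})^`M[m] = 0.
Proof. by rewrite -(scale0r (0 : {mpoly rat[n]})) mderivmZ !scale0r. Qed.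

Definition sp (S : {set 'I_n}) (p : {mpoly rat[n]}) : superpoly n := [ffun T => if T == S then p else 0].

Lemma sp0 (S : {set 'I_n}) : sp S 0 = 0.
Proof. by apply/ffunP=> T; rewrite !ffunE; case: ifP. Qed.

Lemma sp_sum (S : {set 'I_n}) (I : Type) (r : seq I) (P : pred I) (F : I -> {mpoly rat[n]}) :
  sp S (\sum_(i <- r | P i) F i) = \sum_(i <- r | P i) sp S (F i).
Proof.
apply/ffunP=> T; rewrite sum_ffunE !ffunE; under [RHS]eq_bigr do rewrite ffunE.
by case: eqP => _ //; rewrite big1.
Qed.

Lemma coefwise_add (f : {mpoly rat[n]} -> {mpoly rat[n]}) : {morph f : x y / x + y} ->
  {morph coefwise f : x y / x + y}.
Proof. by move=> fD x y; apply/ffunP=> T; rewrite !ffunE fD. Qed.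

Lemma thetaL_add j : {morph @thetaL n j : x y / x + y}.
Proof.
by move=> x y; apply/ffunP=> T; rewrite !ffunE; case: ifP; rewrite ?addr0 // scalerDr.
Qed.

Lemma dop_add i : {morph @dop n i : x y / x + y}.
Proof.
move=> x y; rewrite /dop -big_split /=; apply: eq_bigr => j _.
by rewrite (coefwise_add (@mderivmD _ _ _)) thetaL_add.
Qed.

Lemma dop0 i : @dop n i 0 = 0.
Proof. by apply/(addrI (dop i 0)); rewrite -dop_add !addr0. Qed.

Lemma dop_sum i (I : Type) (r : seq I) (P : pred I) (F : I -> superpoly n) :
  dop i (\sum_(k <- r | P k) F k) = \sum_(k <- r | P k) dop i (F k).
Proof. exact: (big_morph _ (dop_add i) (dop0 i)). Qed.

Lemma dop_sp i (S : {set 'I_n}) (c : rat) (mu : 'X_{1..n}) :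
  dop i (sp S (c *: 'X_[mu])) =
  \sum_(j | j \notin S) sp (j |: S) ((theta_sign j S * c * ((mu j) ^_ i)%:R) *: 'X_[mu - U_(j) *+ i]).
Proof.
rewrite /dop [RHS]big_mkcond /=; apply: eq_bigr => j _.
apply/ffunP => T; rewrite !ffunE.
case jS: (j \in S) => /=.
  rewrite ffunE; case: ifP => // jT.
  case: eqP => [TS|_]; last by rewrite md0 scaler0.
  by move: jS; rewrite -TS !inE eqxx.
rewrite ffunE; case: ifP => jT.
  have -> : (T :\ j == S) = (T == j |: S).
    apply/eqP/eqP => [<-|->]; first by rewrite setD1K.
    by rewrite setU1K // jS.
  case: eqP => [->|_]; last by rewrite md0 scaler0.
  rewrite setU1K ?jS // mderivmZ mderivnX !scalerA; congr (_ *: _).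
  by rewrite mulrA.
case: eqP => // TjS; move: jT; by rewrite TjS !inE eqxx.
Qed.

Lemma pdiffE (g p : {mpoly rat[n]}) (s : seq 'X_{1..n}) : uniq s -> {subset msupp g <= s} ->
  pdiff g p = \sum_(m <- s) g@_m *: p^`M[m].
Proof.
move=> us sub; rewrite /pdiff [RHS](bigID (fun m => m \in msupp g)) /=.
rewrite [X in _ + X]big1 ?addr0; last by move=> m /memN_msupp_eq0 ->; rewrite scale0r.
rewrite -[in RHS]big_filter. apply: perm_big. apply: uniq_perm.
- exact: msupp_uniq.
- exact: filter_uniq.
by move=> m; rewrite mem_filter; case mg: (m \in msupp g) => //=; rewrite sub.
Qed.

Lemma pdiffD (g1 g2 p : {mpoly rat[n]}) : pdiff (g1 + g2) p = pdiff g1 p + pdiff g2 p.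
Proof.
set s := undup (msupp g1 ++ msupp g2).
have us : uniq s by exact: undup_uniq.
rewrite (@pdiffE _ _ s) ?(@pdiffE g1 _ s) ?(@pdiffE g2 _ s) //.
- by rewrite -big_split /=; apply: eq_bigr => m _; rewrite mcoeffD scalerDl.
- by move=> m mg; rewrite mem_undup mem_cat mg orbT.
- by move=> m mg; rewrite mem_undup mem_cat mg.
by move=> m /msuppD_le; rewrite mem_undup.
Qed.

Lemma pdiff0 (p : {mpoly rat[n]}) : pdiff 0 p = 0.
Proof. by apply/(addrI (pdiff 0 p)); rewrite -pdiffD !addr0. Qed.

Lemma pdiff_sum (I : Type) (r : seq I) (P : pred I) (F : I -> {mpoly rat[n]}) p :
  pdiff (\sum_(k <- r | P k) F k) p = \sum_(k <- r | P k) pdiff (F k) p.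
Proof. exact: (big_morph (fun g => pdiff g p) (fun x y => pdiffD x y p) (pdiff0 p)). Qed.

Lemma pdiffX (m : 'X_{1..n}) (p : {mpoly rat[n]}) : pdiff 'X_[m] p = p^`M[m].
Proof. by rewrite /pdiff msuppX big_seq1 mcoeffX eqxx scale1r. Qed.

Lemma pdiffZr (g p : {mpoly rat[n]}) (c : rat) : pdiff g (c *: p) = c *: pdiff g p.
Proof.
rewrite /pdiff scaler_sumr; apply: eq_bigr => m _.
by rewrite mderivmZ !scalerA mulrC.
Qed.

Lemma spdiff_sp (g : {mpoly rat[n]}) S p : spdiff g (sp S p) = sp S (pdiff g p).
Proof.
apply/ffunP => T; rewrite !ffunE; case: ifP => // _.
by rewrite -(scale0r (0 : {mpoly rat[n]})) pdiffZr !scale0r.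
Qed.

Lemma spdiff_sum g (I : Type) (r : seq I) (P : pred I) (F : I -> superpoly n) :
  spdiff g (\sum_(k <- r | P k) F k) = \sum_(k <- r | P k) spdiff g (F k).
Proof.
apply: (big_morph _ _ _).
- move=> x y; apply/ffunP => T; rewrite !ffunE /pdiff -big_split /=.
  by apply: eq_bigr => m _; rewrite mderivmD scalerDr.
apply/ffunP => T; rewrite !ffunE.
by rewrite -(scale0r (0 : {mpoly rat[n]})) pdiffZr !scale0r.
Qed.


Definition mb (b : {ffun 'I_n -> bool}) : 'X_{1..n} := [multinom (b i : nat) | i < n].

Definition condb k r (b : {ffun 'I_n -> bool}) :=
  [forall l : 'I_n, (k <= l)%N ==> ~~ b l] && ((\sum_(l < n) b l)%N == r).

Lemma pdiff_elemsym k r (mu : 'X_{1..n}) :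
  pdiff (@elemsym n k r) 'X_[mu] =
  \sum_(b | condb k r b) ((\prod_(i < n) (mu i)^_(b i))%:R *: 'X_[mu - mb b]).
Proof.
rewrite /elemsym pdiff_sum.
pose h (b : {ffun 'I_n -> bool}) := [set l | b l].
pose h' (A : {set 'I_n}) := [ffun l => l \in A].
have c1 : cancel h h' by move=> b; apply/ffunP => l; rewrite ffunE inE.
have c2 : cancel h' h by move=> A; apply/setP => l; rewrite inE ffunE.
rewrite (reindex h (onW_bij _ (Bijective c1 c2))) /=.
apply: eq_big => [b|b _].
  rewrite /condb; congr andb.
    apply/forallP/forallP => H l.
      by apply/implyP => kl; apply/negP => bl; move: (H l); rewrite inE bl /= ltnNge kl.
    by apply/implyP; rewrite inE => bl; move: (H l); rewrite bl implybF -ltnNge.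
  congr (_ == r); rewrite cardE -sum1_size big_enum_cond /=.
  rewrite [RHS](bigID (fun l => b l)) /= [X in (_ + X)%N]big1 ?addn0.
    by apply: eq_big => l; rewrite ?inE ?andbT // => ->.
  by move=> l /negbTE ->.
have -> : \prod_(i in h b) ('X_i : {mpoly rat[n]}) = 'X_[mb b].
  rewrite mprodXE; congr (mpolyX _ _); apply/mnmP => l.
  rewrite mnm_sumE mnmE big_mkcond (bigD1 l) //= big1 ?addn0.
    by rewrite inE mnm1E eqxx; case: (b l).
  by move=> x xl; rewrite mnm1E (negbTE xl); case: ifP.
rewrite pdiffX mderivmX; congr (_%:R *: _); apply: eq_bigr => i _; by rewrite mnmE.
Qed.


Lemma prod_sg_inv (s : {perm 'I_n}) :
  \prod_(i < n) \prod_(j < n | (val i < val j)%N) Num.sg ((s j)%:R - (s i)%:R : rat)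
  = (-1) ^+ inversions s.
Proof.
rewrite pair_big_dep /= (bigID (fun p : 'I_n * 'I_n => (val (s p.2) < val (s p.1))%N)) /=.
rewrite [X in _ * X]big1 ?mulr1; last first.
  move=> p /andP [lt12 nlt]; apply: gtr0_sg; rewrite subr_gt0 ltr_nat ltn_neqAle.
  rewrite leqNgt nlt andbT; apply/negP => /eqP /val_inj /perm_inj E.
  by move: lt12; rewrite E ltnn.
rewrite (eq_bigr (fun _ => -1)); last first.
  by move=> p /andP [_ lt]; apply: ltr0_sg; rewrite subr_lt0 ltr_nat.
by rewrite prodr_const /inversions cardsE.
Qed.


Lemma vdm_perm (s : {perm 'I_n}) :
  \prod_(i < n) \prod_(j < n | (val i < val j)%N) ((s j)%:R - (s i)%:R : rat)
  = (-1) ^+ s * \prod_(i < n) \prod_(j < n | (val i < val j)%N) (j%:R - i%:R : rat).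
Proof.
pose a : 'rV[rat]_n := \row_j (val j)%:R.
pose b : 'rV[rat]_n := \row_j (val (s j))%:R.
have Va : \det (Vandermonde n a) = \prod_(i < n) \prod_(j < n | (val i < val j)%N) (j%:R - i%:R : rat).
  by rewrite det_Vandermonde; apply: eq_bigr => i _; apply: eq_big => // j _; rewrite !mxE.
have Vb : \det (Vandermonde n b) = \prod_(i < n) \prod_(j < n | (val i < val j)%N) ((s j)%:R - (s i)%:R : rat).
  by rewrite det_Vandermonde; apply: eq_bigr => i _; apply: eq_big => // j _; rewrite !mxE.
have E : Vandermonde n b = col_perm s (Vandermonde n a).
  by apply/matrixP => i j; rewrite !mxE.
by rewrite -Vb -Va E col_permE det_mulmx det_perm odd_permV mulrC.
Qed.

Lemma sign_inv (s : {perm 'I_n}) : ((-1) ^+ inversions s : rat) = (-1) ^+ s.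
Proof.
rewrite -prod_sg_inv.
have -> : \prod_(i < n) \prod_(j < n | (val i < val j)%N) Num.sg ((s j)%:R - (s i)%:R : rat)
   = Num.sg (\prod_(i < n) \prod_(j < n | (val i < val j)%N) ((s j)%:R - (s i)%:R : rat)).
  rewrite (big_morph _ (@sgrM _) (sgr1 _)); apply: eq_bigr => i _.
  by rewrite (big_morph _ (@sgrM _) (sgr1 _)).
have P1 : 0 < \prod_(i < n) \prod_(j < n | (val i < val j)%N) (j%:R - i%:R : rat).
  apply: prodr_gt0 => i _; apply: prodr_gt0 => j ij.
  by rewrite subr_gt0 ltr_nat.
rewrite vdm_perm sgrM (gtr0_sg P1) mulr1.
by case: (odd_perm s); rewrite ?expr1 ?expr0 ?sgrN1 ?sgr1.
Qed.


Definition mh (s : {perm 'I_n}) : 'X_{1..n} := [multinom (val (s i)) | i < n].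

Lemma vdm_expand :
  @vandermonde n = \sum_(s : {perm 'I_n}) ((-1) ^+ inversions s : rat) *: 'X_[mh s].
Proof.
pose a : 'rV[{mpoly rat[n]}]_n := \row_j 'X_j.
have -> : @vandermonde n = \det (Vandermonde n a)^T.
  rewrite det_tr det_Vandermonde /vandermonde; apply: eq_bigr => i _.
  by apply: eq_big => // j _; rewrite !mxE.
rewrite /determinant; apply: eq_bigr => s _.
rewrite sign_inv mulr_sign scaler_sign; congr (if _ then - _ else _);
rewrite mpolyXE_id; apply: eq_bigr => i _; by rewrite !mxE mnmE.
Qed.


Definition seqa (a : {ffun 'I_n -> 'I_n}) : seq nat :=
  [seq val (a c) | c <- enum 'I_n & (0 < val (a c))%N].

Lemma count_seqa (q : pred nat) a :
  count q (seqa a) = #|[pred c | q (val (a c)) && (0 < val (a c))%N]|.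
Proof.
rewrite /seqa count_map count_filter -sum1_count big_enum_cond /= sum1_card.
by apply: eq_card => c; rewrite !inE.
Qed.


Definition upd (a : {ffun 'I_n -> 'I_n}) (j v : 'I_n) : {ffun 'I_n -> 'I_n} :=
  [ffun c => if c == j then v else a c].

Definition zo (j : 'I_n) : 'I_n := Ordinal (leq_ltn_trans (leq0n j) (ltn_ord j)).

Definition b0 : {ffun 'I_n -> bool} := [ffun=> false].

Definition sgnp (a : {ffun 'I_n -> 'I_n}) : rat :=
  \prod_(v in xcols a) \prod_(w in xcols a | (val v < val w)%N)
     Num.sg ((val (a w))%:R - (val (a v))%:R : rat).

Definition ffp (h : {perm 'I_n}) (a : {ffun 'I_n -> 'I_n}) (b : {ffun 'I_n -> bool}) : rat :=
  \prod_(l < n) ((val (h l)) ^_ (val (a l) + b l))%:R.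

Lemma perm_upd (a : {ffun 'I_n -> 'I_n}) (j v : 'I_n) : val (a j) = 0%N -> (0 < val v)%N ->
  perm_eq (seqa (upd a j v)) (val v :: seqa a).
Proof.
move=> aj0 v0; apply/seq.permP => q /=; rewrite !count_seqa.
rewrite (cardD1 j) [in RHS](cardD1 j) !inE /= ffunE eqxx aj0 andbF v0 andbT add0n.
congr (_ + _)%N; apply: eq_card => c; rewrite !inE ffunE.
by case: (c == j).
Qed.

Lemma xcols_upd (a : {ffun 'I_n -> 'I_n}) (j v : 'I_n) : (0 < val v)%N -> xcols (upd a j v) = j |: xcols a.
Proof.
move=> v0; apply/setP => c; rewrite !inE ffunE.
by case: (c =P j) => [->|]; rewrite ?v0 ?eqxx.
Qed.

Lemma ffp_upd (h : {perm 'I_n}) (a : {ffun 'I_n -> 'I_n}) (j v : 'I_n) : val (a j) = 0%N ->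
  ffp h (upd a j v) b0 = ffp h a b0 * ((val (h j)) ^_ (val v))%:R.
Proof.
move=> aj0; rewrite /ffp (bigD1 j) // [in RHS](bigD1 j) //= !ffunE eqxx aj0.
rewrite addn0 ffactn0 mul1r mulrC; congr (_ * _); apply: eq_bigr => c cj.
by rewrite ffunE (negbTE cj).
Qed.

Lemma mon_upd (h : {perm 'I_n}) (a : {ffun 'I_n -> 'I_n}) (j v : 'I_n) : val (a j) = 0%N ->
  staircase_monomial h (upd a j v) b0 = (staircase_monomial h a b0 - U_(j) *+ val v)%MM.
Proof.
move=> aj0; apply/mnmP => c; rewrite mnmBE !mnmE mulmnE mnm1E !ffunE.
case: (c =P j) => [->|/eqP cj]; first by rewrite eqxx aj0 !subn0 mul1n.
by rewrite eq_sym (negbTE cj) mul0n subn0.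
Qed.


Lemma upd_j (a : {ffun 'I_n -> 'I_n}) (j v : 'I_n) : upd a j v j = v.
Proof. by rewrite ffunE eqxx. Qed.

Lemma sgnp_upd (a : {ffun 'I_n -> 'I_n}) (j v : 'I_n) : val (a j) = 0%N -> (0 < val v)%N ->
  (forall c, (0 < val (a c))%N -> (val v < val (a c))%N) ->
  sgnp (upd a j v) = theta_sign j (xcols a) * sgnp a.
Proof.
move=> aj0 v0 big.
have jX : j \notin xcols a by rewrite inE aj0.
have ua : forall c, c \in xcols a -> upd a j v c = a c.
  by move=> c cX; rewrite ffunE; case: (c =P j) => // E; move: jX; rewrite -E cX.
rewrite /sgnp xcols_upd // big_setU1 //= big_mkcondr big_setU1 //= ltnn.
rewrite mul1r [X in X * _]big1 ?mul1r; last first.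
  move=> w wX; case: ifP => // _; rewrite ua // ffunE eqxx.
  by apply: gtr0_sg; rewrite subr_gt0 ltr_nat big //; move: wX; rewrite inE.
rewrite (eq_bigr (fun u => (if (val u < val j)%N then -1 else 1) *
   \prod_(w in xcols a | (val u < val w)%N) Num.sg ((val (a w))%:R - (val (a u))%:R : rat))); last first.
  move=> u uX; rewrite big_mkcondr big_setU1 //= (ua u uX) upd_j.
  congr (_ * _).
    case: ifP => // _; apply: ltr0_sg; rewrite subr_lt0 ltr_nat big //.
    by move: uX; rewrite inE.
  rewrite [RHS]big_mkcondr; apply: eq_bigr => w wX; by rewrite ua.
rewrite big_split /=; congr (_ * _).
rewrite -big_mkcondr /theta_sign -prodr_const; apply: eq_bigl => u.
by rewrite !inE.
Qed.


Definition term (h : {perm 'I_n}) (a : {ffun 'I_n -> 'I_n}) : superpoly n :=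
  sp (xcols a) (((-1) ^+ inversions h * sgnp a * ffp h a b0) *: 'X_[staircase_monomial h a b0]).

Lemma updK (a : {ffun 'I_n -> 'I_n}) (j v w : 'I_n) : (upd (upd a j v) j w == a) = (a j == w).
Proof.
apply/eqP/eqP => [<-|E]; first by rewrite upd_j.
by apply/ffunP => c; rewrite !ffunE; case: (c =P j) => [->|].
Qed.

Lemma count_big (i : nat) (J : seq nat) : all (fun x => i < x)%N J -> count (pred1 i) J = 0%N.
Proof.
elim: J => //= x J IH /andP [ix H]; rewrite IH // addn0.
by case: eqP ix => // ->; rewrite ltnn.
Qed.

Lemma mem_seqa (a : {ffun 'I_n -> 'I_n}) c : (0 < val (a c))%N -> val (a c) \in seqa a.
Proof. by move=> ac; apply/mapP; exists c; rewrite // mem_filter ac mem_enum. Qed.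

Lemma step (i : nat) (J : seq nat) (hi : (0 < i)%N) (hin : (i < n)%N)
  (hJ : all (fun x => i < x)%N J) :
  dop i (\sum_(h : {perm 'I_n}) \sum_(a | perm_eq (seqa a) J) term h a) =
  \sum_(h : {perm 'I_n}) \sum_(a | perm_eq (seqa a) (i :: J)) term h a.
Proof.
rewrite dop_sum; apply: eq_bigr => h _; rewrite dop_sum.
pose iv : 'I_n := Ordinal hin.
under eq_bigr do rewrite /term dop_sp.
rewrite (exchange_big_dep predT) //=.
have -> : \sum_(a | perm_eq (seqa a) (i :: J)) term h a =
          \sum_(a | perm_eq (seqa a) (i :: J)) \sum_(j | a j == iv) term h a.
  apply: eq_bigr => a Pa; rewrite sumr_const.
  suff -> : #|(fun j => a j == iv)| = 1%N by rewrite mulr1n.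
  have := count_seqa (pred1 i) a; rewrite (seq.permP Pa) /= eqxx count_big // => E.
  rewrite [RHS](_ : 1%N = (true + 0)%N) // E; apply: eq_card => c; rewrite !inE unfold_in -val_eqE /=.
  by case: eqP => [->|]; rewrite ?hi.
rewrite [RHS](exchange_big_dep predT) //=; apply: eq_bigr => j _.
rewrite [RHS](reindex_onto (fun a' => upd a' j iv) (fun a => upd a j (zo j))); last first.
  move=> a /andP [_ /eqP aj]; apply/ffunP => c; rewrite !ffunE.
  by case: (c =P j) => [->|].
apply: eq_big => [a'|a' /andP [Pa' jX]].
  rewrite upd_j eqxx andbT updK.
  case: (a' j =P zo j) => [E|NE].
    have E0 : val (a' j) = 0%N by rewrite E.
    rewrite andbT (permPl (@perm_upd a' j iv E0 hi)) perm_cons inE E0 /=.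
    by rewrite andbT.
  rewrite andbF; apply/negbTE; apply/negP => /andP [_].
  rewrite inE -leqNgt leqn0 => /eqP E0; apply: NE; apply/val_inj; by rewrite E0.
have E0 : val (a' j) = 0%N by move: jX; rewrite inE lt0n negbK => /eqP.
have bigc : forall c, (0 < val (a' c))%N -> (val iv < val (a' c))%N.
  move=> c /(mem_seqa) ac; rewrite (perm_mem Pa') in ac.
  by move/allP: hJ => /(_ _ ac).
rewrite /term xcols_upd // sgnp_upd // ffp_upd // mon_upd //=.
rewrite mnmE ffunE E0 subn0 subn0.
congr (sp _ (_ *: _)); rewrite !mulrA; congr (_ * _ * _ * _).
exact: mulrC.
Qed.


Definition a0 : {ffun 'I_n -> 'I_n} := [ffun c => zo c].

Lemma seqa_nil (a : {ffun 'I_n -> 'I_n}) : perm_eq (seqa a) [::] = (a == a0).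
Proof.
apply/perm_nilP/eqP => [H|->].
  apply/ffunP => c; rewrite ffunE; apply/val_inj => /=.
  case: (posnP (val (a c))) => // ac; have := mem_seqa ac; by rewrite H.
apply/nilP; rewrite /nilp -count_predT count_seqa; apply/eqP; apply: eq_card0 => c.
by rewrite !inE /a0 ffunE /=.
Qed.

Lemma base : superC (@vandermonde n) =
  \sum_(h : {perm 'I_n}) \sum_(a | perm_eq (seqa a) [::]) term h a.
Proof.
rewrite vdm_expand (_ : forall p, superC p = sp set0 p) // sp_sum.
apply: eq_bigr => h _.
rewrite (eq_bigl _ _ seqa_nil) big_pred1_eq /term /sgnp.
have -> : xcols a0 = set0 by apply/setP => c; rewrite !inE ffunE /= ltnn.
rewrite big_set0 /ffp big1 ?mulr1; last by move=> l _; rewrite !ffunE addn0 ffactn0.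
congr (sp _ (_ *: 'X_[_])); apply/mnmP => c; by rewrite !mnmE !ffunE /= !subn0.
Qed.


Lemma main_ind (J : seq nat) : sorted ltn J -> all (fun i => (0 < i < n)%N) J ->
  foldr (@dop n) (superC (@vandermonde n)) J =
  \sum_(h : {perm 'I_n}) \sum_(a | perm_eq (seqa a) J) term h a.
Proof.
elim: J => [|i J IH] /= srt al; first exact: base.
case/andP: al => /andP [hi hin] al.
rewrite IH ?(path_sorted srt) //; apply: step => //.
exact: (order_path_min ltn_trans srt).
Qed.

Lemma prod_range (h x : nat) : (x <= h)%N -> (\prod_((h - x).+1 <= t < h.+1) t)%N = h ^_ x.
Proof.
elim: x => [|x IH] hx; first by rewrite subn0 big_geq // ffactn0.
by rewrite subnSK // big_ltn ?ltnS ?leq_subr // IH ?(ltnW hx) // ffactnSr mulnC.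
Qed.

Lemma coef_comb (h : {perm 'I_n}) (a : {ffun 'I_n -> 'I_n}) (b : {ffun 'I_n -> bool}) :
  ffp h a b0 * (\prod_(l < n) ((staircase_monomial h a b0) l) ^_ (b l))%:R = ffp h a b.
Proof.
rewrite natr_prod /ffp -big_split; apply: eq_bigr => l _ /=.
rewrite mnmE !ffunE /= !addn0 subn0 -natrM; congr (_%:R).
case: (b l); rewrite /nat_of_bool; first by rewrite ffactn1 addn1 ffactnSr.
by rewrite addn0 ffactn0 muln1.
Qed.

Lemma ffp_zero (h : {perm 'I_n}) (a : {ffun 'I_n -> 'I_n}) (b : {ffun 'I_n -> bool}) :
  ~~ [forall l, (val (a l) + b l <= val (h l))%N] -> ffp h a b = 0.
Proof.
rewrite negb_forall => /existsP [l H]; rewrite /ffp (bigD1 l) //= ffact_small ?mul0r //.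
by rewrite ltnNge.
Qed.

Lemma order_eq (h : {perm 'I_n}) (a : {ffun 'I_n -> 'I_n}) (b : {ffun 'I_n -> bool}) :
  [forall l, (val (a l) + b l <= val (h l))%N] -> ((staircase_order h a b)%:R : rat) = ffp h a b.
Proof.
move/forallP => H; rewrite natr_prod; apply: eq_bigr => l _.
by rewrite -subnDA prod_range.
Qed.

Lemma mon_b (h : {perm 'I_n}) (a : {ffun 'I_n -> 'I_n}) (b : {ffun 'I_n -> bool}) :
  staircase_monomial h a b = (staircase_monomial h a b0 - mb b)%MM.
Proof. by apply/mnmP => c; rewrite mnmBE !mnmE ffunE subn0. Qed.

End Work.

Theorem lemma4p5 (n : nat) (I : seq nat) (m r : nat) :
  sorted ltn I -> all (fun i => (0 < i < n)%N) I -> (m <= n)%N ->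
  spdiff (@elemsym n (n - m) r) (foldr (@dop n) (superC (@vandermonde n)) I) =
  \sum_(h : {perm 'I_n}) \sum_(a : {ffun 'I_n -> 'I_n}) \sum_(b : {ffun 'I_n -> bool}
        | [&& is_marked_staircase m h a b,
              (\sum_(l < n) b l)%N == r &
              perm_eq [seq val (a c) | c <- enum 'I_n & (0 < val (a c))%N] I])
     staircase_weight h a b.
Proof.
move=> srt al mn.
rewrite main_ind // spdiff_sum; apply: eq_bigr => h _.
rewrite spdiff_sum.
under eq_bigr do rewrite /term spdiff_sp pdiffZr pdiff_elemsym scaler_sumr sp_sum.
symmetry.
rewrite (bigID (fun a => perm_eq (seqa a) I)) /= [X in _ + X]big1 ?addr0; last first.
  move=> a nP; apply: big1 => b /and3P [_ _ P]; by rewrite P in nP.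
apply: eq_bigr => a Pa.
rewrite [RHS](bigID (fun b : {ffun 'I_n -> bool} => [forall l, (val (a l) + b l <= val (h l))%N])) /=.
rewrite [X in _ + X]big1 ?addr0; last first.
  move=> b /andP [_ nf]; rewrite scalerA -[(_ * ffp _ _ _) * _]mulrA coef_comb.
  by rewrite ffp_zero // !mulr0 scale0r sp0.
apply: eq_big => b.
  rewrite -/(seqa a) Pa andbT /is_marked_staircase /condb.
  by rewrite -andbA andbC.
move=> /and3P [/andP [fa _] _ _].
by rewrite scalerA -[(_ * ffp _ _ _) * _]mulrA coef_comb -order_eq // -mon_b.
Qed.
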